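(* Every finite non-empty word $W$ over a $2$-letter alphabet satisfies $r(W)=1$, i.e., $W$ has exactly one square-free reduct.
   Context: A square is a finite non-empty word of the form $XX$. A word is square-free if it has no factor that is a square. If a word has the form $W=UXXV$ with $X$ non-empty, replacing it by $UXV$ is called a square reduction. A reduct of $W$ is any square-free word obtainable from $W$ by a finite sequence (possibly empty) of square reductions. $r(W)$ denotes the number of distinct reducts of $W$. *)

(* Defs.v *)
From mathcomp Require Import all_boot.
Set Implicit Arguments. Unset Strict Implicit. Unset Printing Implicit Defensive.

Definition is_square (T : eqType) (w : seq T) : Prop :=
  exists x : seq T, x <> [::] /\ w = x ++ x.

Definition square_free (T : eqType) (w : seq T) : Prop :=
  forall u x v : seq T, x <> [::] -> w <> u ++ x ++ x ++ v.

Definition square_reduction (T : eqType) (w w' : seq T) : Prop :=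
  exists u x v : seq T, x <> [::] /\ w = u ++ x ++ x ++ v /\ w' = u ++ x ++ v.

Inductive reduces (T : eqType) : seq T -> seq T -> Prop :=
| reduces_refl w : reduces w w
| reduces_step w w' w'' : square_reduction w w' -> reduces w' w'' -> reduces w w''.

Definition is_reduct (T : eqType) (w r : seq T) : Prop :=
  reduces w r /\ square_free r.

(* Main.v *)
From Stdlib Require Import Classical.
Require Import Defs.
From mathcomp Require Import all_boot.

Section S.
Variable T : eqType.

Lemma step_inv (w w' : seq T) d : square_reduction w w' ->
  [/\ head d w' = head d w, last d w' = last d w, (0 < size w') = (0 < size w)
    & w' =i w].
Proof.
case=> u [x [v [hx [-> ->]]]].
case: x hx => [//|a x] _.
split.
- by case: u.
- by rewrite !last_cat /=.
- by rewrite !size_cat /= !addnS.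
- move=> c; rewrite !mem_cat; case: (c \in a :: x); by rewrite ?orbT.
Qed.

Lemma reduces_inv (w w' : seq T) d : reduces w w' ->
  [/\ head d w' = head d w, last d w' = last d w, (0 < size w') = (0 < size w)
    & w' =i w].
Proof.
elim=> [z|w1 w2 w3 h _ [e1 e2 e3 e4]]; first by split.
case: (step_inv _ _ d h) => f1 f2 f3 f4.
split; [by rewrite e1 f1 | by rewrite e2 f2 | by rewrite e3 f3 |].
by move=> c; rewrite e4 f4.
Qed.

Lemma exists_reduct n (w : seq T) : size w < n -> exists r, reduces w r /\ square_free r.
Proof.
elim: n w => [//|n IH] w hs.
destruct (classic (square_free w)) as [H|H].
  by exists w; split => //; constructor.
apply: NNPP => HH; apply: H => u x v hx e.
apply: HH.
have [r [h1 h2]] : exists r, reduces (u ++ x ++ v) r /\ square_free r.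
  apply: IH.
  move: hs; rewrite e !size_cat; case: x hx {e} => [//|a x] _ /=.
  rewrite !addSn !addnS ltnS => h; apply: leq_trans h.
  by rewrite !ltnS !leq_add2l leq_addl.
exists r; split => //.
apply: (reduces_step _ h1).
by exists u, x, v.
Qed.
End S.

Lemma three (T : finType) (hT : #|T| = 2) (x y z : T) : x != y -> y != z -> x = z.
Proof.
move=> hxy hyz; apply/eqP; apply/negPn/negP => hxz.
have U : uniq [:: x; y; z].
  by rewrite /= !inE negb_or hxy hxz hyz.
have := @uniq_leq_size _ [:: x; y; z] (enum T) U (fun t _ => mem_enum T t).
by rewrite -cardE hT.
Qed.

Lemma sf_class (T : finType) (hT : #|T| = 2) (r : seq T) :
  square_free r -> 0 < size r ->
  (exists a, r = [:: a]) \/ exists a b, a != b /\ (r = [:: a; b] \/ r = [:: a; b; a]).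
Proof.
move=> sf.
case: r sf => [//|a [|b [|c [|d s]]]] sf _; first by left; exists a.
- right; exists a, b; split; last by left.
  by apply/eqP => e; subst; apply: (sf [::] [:: b] [::]).
- right; exists a, b.
  have ab : a != b by apply/eqP => e; subst; apply: (sf [::] [:: b] [:: c]).
  have bc : b != c by apply/eqP => e; subst; apply: (sf [:: a] [:: c] [::]).
  split => //; right; by rewrite (@three _ hT _ _ _ ab bc).
- exfalso.
  have ab : a != b by apply/eqP => e; subst; apply: (sf [::] [:: b] [:: c, d & s]).
  have bc : b != c by apply/eqP => e; subst; apply: (sf [:: a] [:: c] [:: d & s]).
  have cd : c != d by apply/eqP => e; subst; apply: (sf [:: a; b] [:: d] s).
  have e1 := @three _ hT _ _ _ ab bc; have e2 := @three _ hT _ _ _ bc cd; subst.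
  by apply: (sf [::] [:: c; d] s).
Qed.

Theorem proposition2p1 (T : finType) (hT : #|T| = 2) (W : seq T) (hW : W <> [::]) :
  exists r : seq T, is_reduct W r /\ forall r' : seq T, is_reduct W r' -> r' = r.
Proof.
have [r [hr sr]] := @exists_reduct _ _ W (ltnSn (size W)).
have Wp : 0 < size W by case: W hW {hr sr}.
exists r; split; first by [].
move=> r' [hr' sr'].
have [d _] : exists d : T, True.
  case: W hW {hr hr' Wp} => [//|a _ _]; by exists a.
have [h1 l1 s1 m1] := @reduces_inv _ _ _ d hr.
have [h2 l2 s2 m2] := @reduces_inv _ _ _ d hr'.
have eh : head d r' = head d r by rewrite h1 h2.
have el : last d r' = last d r by rewrite l1 l2.
have em : r' =i r by move=> c; rewrite m1 m2.
rewrite Wp in s1 s2.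
clear -hT eh el em sr sr' s1 s2.
case: (@sf_class _ hT _ sr s1) => [[a E1]|[a [b [ab [E1|E1]]]]];
case: (@sf_class _ hT _ sr' s2) => [[a' E2]|[a' [b' [ab' [E2|E2]]]]]; subst r r';
  move: eh el em => /= eh el em; subst.
all: try done; try (by rewrite eqxx in ab); try (by rewrite eqxx in ab').
- have := em b'; rewrite !inE eqxx ?orbT /= => /esym/eqP E; subst; by move: ab'; rewrite eqxx.
- have := em b; rewrite !inE eqxx ?orbT /= => /eqP E; subst; by move: ab; rewrite eqxx.
- have ba' : b' != a by rewrite eq_sym.
  by rewrite (@three _ hT _ _ _ ba' ab).
Qed.
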